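(* Let $X \subseteq \mathbb{Z}^d$ be a finite lattice-convex set, let $H$ be a hiding set for $X$, and assume there exists $h \in H \setminus \mathrm{obs}(X)$. Then, for every $y \in \mathrm{obs}(X) \cap \mathrm{conv}(\{h\} \cup X)$, the set $(H \setminus \{h\}) \cup \{y\}$ is a hiding set for $X$. In particular, there is a maximum size hiding set for $X$ contained in $\mathrm{obs}(X)$.
   Context: A set $X \subseteq \mathbb{Z}^d$ is lattice-convex if $\mathrm{conv}(X) \cap \mathbb{Z}^d = X$. An observer of $X$ is a point $z \in \mathbb{Z}^d \setminus X$ such that $\mathrm{conv}(X \cup \{z\}) \cap \mathbb{Z}^d = X \cup \{z\}$; $\mathrm{obs}(X)$ is the set of observers. A set $H \subseteq (\mathrm{aff}(X) \cap \mathbb{Z}^d) \setminus X$ is a hiding set for $X$ if for all distinct $x,y \in H$ one has $\mathrm{conv}(\{x,y\}) \cap \mathrm{conv}(X) \ne \emptyset$. *)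

(* Defs.v *)
(* Points of Z^d are row vectors 'rV[int]_d; convexity is
   computed in R^d for an arbitrary real field R (R : realFieldType). *)
From HB Require Import structures.
From mathcomp Require Import all_boot all_order all_algebra.
From mathcomp Require Import finmap.
Set Implicit Arguments. Unset Strict Implicit. Unset Printing Implicit Defensive.
Import Order.TTheory GRing.Theory Num.Theory.
Local Open Scope ring_scope.

Section Defs.
Variable R : realFieldType.
Variable d : nat.

Definition emb (z : 'rV[int]_d) : 'rV[R]_d := map_mx (fun a : int => a%:~R) z.

Definition embset (A : 'rV[int]_d -> Prop) : 'rV[R]_d -> Prop :=
  fun p => exists2 z, A z & p = emb z.

Definition conv (S : 'rV[R]_d -> Prop) (p : 'rV[R]_d) : Prop :=
  exists (n : nat) (v : 'I_n -> 'rV[R]_d) (l : 'I_n -> R),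
    [/\ forall i, S (v i), forall i, 0 <= l i, \sum_i l i = 1
      & p = \sum_i l i *: v i].

Definition aff (S : 'rV[R]_d -> Prop) (p : 'rV[R]_d) : Prop :=
  exists (n : nat) (v : 'I_n -> 'rV[R]_d) (l : 'I_n -> R),
    [/\ forall i, S (v i), \sum_i l i = 1 & p = \sum_i l i *: v i].

Definition lattice_convex (X : 'rV[int]_d -> Prop) : Prop :=
  forall z, conv (embset X) (emb z) <-> X z.

Definition observer (X : 'rV[int]_d -> Prop) (z : 'rV[int]_d) : Prop :=
  ~ X z /\ lattice_convex (fun w => X w \/ w = z).

Definition hiding (X H : 'rV[int]_d -> Prop) : Prop :=
  (forall x, H x -> aff (embset X) (emb x) /\ ~ X x) /\
  (forall x y, H x -> H y -> x <> y ->
     exists p, conv (embset (fun w => w = x \/ w = y)) p /\ conv (embset X) p).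

End Defs.

(* Main.v *)
Require Import Defs.
From HB Require Import structures.
From mathcomp Require Import all_boot all_order all_algebra.
From mathcomp Require Import finmap ring lra.
From Stdlib Require Import Classical.
Set Implicit Arguments. Unset Strict Implicit. Unset Printing Implicit Defensive.
Import Order.TTheory GRing.Theory Num.Theory.
Local Open Scope ring_scope.

Section Aux.
Variable R : realFieldType.
Variable d : nat.
Notation V := 'rV[R]_d.

Lemma conv_pt (S : V -> Prop) v : S v -> conv S v.
Proof.
move=> Sv; exists 1%N, (fun _ => v), (fun _ => 1); split => //.
- by rewrite big_ord1.
- by rewrite big_ord1 scale1r.
Qed.

Lemma conv_mono (S T : V -> Prop) p : (forall q, S q -> T q) -> conv S p -> conv T p.
Proof.
move=> ST [n [v [l [Sv l0 l1 ->]]]]; exists n, v, l; split => // i; exact: ST.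
Qed.

Lemma cat_fam n m (v : 'I_n -> V) (w : 'I_m -> V) (l : 'I_n -> R) (k : 'I_m -> R) (a b : R) :
  exists (u : 'I_(n + m) -> V) (c : 'I_(n + m) -> R),
  [/\ (forall i, (exists j, u i = v j /\ c i = a * l j) \/ (exists j, u i = w j /\ c i = b * k j)),
    \sum_i c i = a * \sum_i l i + b * \sum_i k i &
    \sum_i c i *: u i = a *: \sum_i l i *: v i + b *: \sum_i k i *: w i].
Proof.
exists (fun i : 'I_(n + m) => match split i with inl i => v i | inr j => w j end).
exists (fun i : 'I_(n + m) => match split i with inl i => a * l i | inr j => b * k j end).
set u := (fun i : 'I_(n + m) => _ ); set c := (fun i : 'I_(n + m) => _ ); split.
- move=> i; rewrite /u /c; case: (split i) => j; [left|right]; by exists j.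
- rewrite big_split_ord !mulr_sumr; congr (_ + _); apply: eq_bigr => i _;
  rewrite /c.
  + by change (lshift m i) with (unsplit (inl i : 'I_n + 'I_m)); rewrite unsplitK.
  + by change (rshift n i) with (unsplit (inr i : 'I_n + 'I_m)); rewrite unsplitK.
- rewrite big_split_ord !scaler_sumr; congr (_ + _); apply: eq_bigr => i _;
  rewrite /c /u.
  + by change (lshift m i) with (unsplit (inl i : 'I_n + 'I_m)); rewrite unsplitK scalerA.
  + by change (rshift n i) with (unsplit (inr i : 'I_n + 'I_m)); rewrite unsplitK scalerA.
Qed.

Lemma conv2 (S : V -> Prop) t p q : 0 <= t <= 1 -> conv S p -> conv S q ->
  conv S (t *: p + (1 - t) *: q).
Proof.
move=> /andP[t0 t1] [n [v [l [Sv l0 l1 ->]]]] [m [w [k [Sw k0 k1 ->]]]].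
have [u [c [H1 H2 H3]]] := cat_fam v w l k t (1 - t).
exists (n + m)%N, u, c; split; last first.
- by rewrite H3.
- by rewrite H2 l1 k1 !mulr1 addrC subrK.
- move=> i; case: (H1 i) => [[j [_ ->]]|[j [_ ->]]]; apply: mulr_ge0 => //.
  by rewrite subr_ge0.
- move=> i; case: (H1 i) => [[j [-> _]]|[j [-> _]]] //.
Qed.

Lemma aff2 (S : V -> Prop) t p q : aff S p -> aff S q ->
  aff S (t *: p + (1 - t) *: q).
Proof.
move=> [n [v [l [Sv l1 ->]]]] [m [w [k [Sw k1 ->]]]].
have [u [c [H1 H2 H3]]] := cat_fam v w l k t (1 - t).
exists (n + m)%N, u, c; split; last first.
- by rewrite H3.
- by rewrite H2 l1 k1 !mulr1 addrC subrK.
- move=> i; case: (H1 i) => [[j [-> _]]|[j [-> _]]] //.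
Qed.

Lemma conv_aff (S : V -> Prop) p : conv S p -> aff S p.
Proof. by move=> [n [v [l [Sv _ l1 ->]]]]; exists n, v, l. Qed.

Lemma conv_ind (S P : V -> Prop) :
  (forall v, S v -> P v) ->
  (forall t u w, 0 <= t <= 1 -> P u -> P w -> P (t *: u + (1 - t) *: w)) ->
  forall p, conv S p -> P p.
Proof.
move=> SP PC p [n [v [l [Sv l0 l1 ->]]]].
elim: n v l Sv l0 l1 => [|n IH] v l Sv l0 l1.
  by move: l1; rewrite big_ord0 => /eqP; rewrite eq_sym oner_eq0.
rewrite big_ord_recl; move: l1; rewrite big_ord_recl => l1.
have rest0 : 0 <= \sum_(i < n) l (lift ord0 i) by apply: sumr_ge0.
have [e1|ne1] := eqVneq (l ord0) 1.
  have r0 : \sum_(i < n) l (lift ord0 i) = 0.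
    by apply: (addrI (l ord0)); rewrite addr0 l1 e1.
  have z : forall i, l (lift ord0 i) = 0.
    by move=> i; apply: (psumr_eq0P _ r0).
  rewrite big1 ?addr0; last by move=> i _; rewrite z scale0r.
  by rewrite e1 scale1r; apply: SP.
set r := \sum_(i < n) l (lift ord0 i).
have rE : r = 1 - l ord0 by rewrite -l1 addrC addKr.
have rn0 : r != 0 by rewrite rE subr_eq0 eq_sym.
have -> : \sum_(i < n) l (lift ord0 i) *: v (lift ord0 i) =
  (1 - l ord0) *: \sum_(i < n) (l (lift ord0 i) / r) *: v (lift ord0 i).
  rewrite scaler_sumr; apply: eq_bigr => i _; rewrite scalerA -rE.
  by rewrite mulrCA divff // mulr1.
apply: PC.
- by rewrite l0 /= -subr_ge0 -rE.
- exact: SP.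
- apply: IH.
  + by move=> i; apply: Sv.
  + by move=> i; apply: divr_ge0 => //; apply: l0.
  + by rewrite -mulr_suml divff.
Qed.


Lemma conv_dec (S : V -> Prop) a c0 p : S c0 -> conv (fun q => q = a \/ S q) p ->
  exists lam c, [/\ 0 <= lam <= 1, conv S c & p = lam *: a + (1 - lam) *: c].
Proof.
move=> Sc0; apply: (conv_ind (P := fun p => exists lam c, [/\ 0 <= lam <= 1, conv S c & p = lam *: a + (1 - lam) *: c])).
  move=> q [->|Sq].
    exists 1, c0; split; [by rewrite ler01 lexx | exact: conv_pt |].
    by apply/rowP => j; rewrite !mxE; ring.
  exists 0, q; split; [by rewrite lexx ler01 | exact: conv_pt |].
  by apply/rowP => j; rewrite !mxE; ring.
move=> t u w /andP[t0 t1] [l1 [c1 [/andP[a1 b1] C1 ->]]] [l2 [c2 [/andP[a2 b2] C2 ->]]].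
have x0 : 0 <= t * (1 - l1) by apply: mulr_ge0; lra.
have y0 : 0 <= (1 - t) * (1 - l2) by apply: mulr_ge0; lra.
have p1 : 0 <= t * l1 by apply: mulr_ge0.
have p2 : 0 <= (1 - t) * l2 by apply: mulr_ge0; lra.
have sum : t * (1 - l1) + (1 - t) * (1 - l2) = 1 - (t * l1 + (1 - t) * l2) by ring.
have [eL|nL] := eqVneq (t * l1 + (1 - t) * l2) 1.
  have ex : t * (1 - l1) = 0 by lra.
  have ey : (1 - t) * (1 - l2) = 0 by lra.
  exists 1, c0; split; [by rewrite ler01 lexx | exact: conv_pt |].
  apply/rowP => j; rewrite !mxE.
  transitivity ((t * l1 + (1 - t) * l2) * a 0 j + t * (1 - l1) * c1 0 j + (1 - t) * (1 - l2) * c2 0 j).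
    by ring.
  by rewrite eL ex ey; ring.
have D0 : 0 < 1 - (t * l1 + (1 - t) * l2).
  rewrite lt_neqAle; apply/andP; split; last by lra.
  by rewrite eq_sym subr_eq0 eq_sym.
have Dn : 1 - (t * l1 + (1 - t) * l2) != 0 by rewrite gt_eqF.
set s := t * (1 - l1) / (1 - (t * l1 + (1 - t) * l2)).
have s0 : 0 <= s <= 1.
  apply/andP; split; first by apply: divr_ge0 => //; apply: ltW.
  by rewrite ler_pdivrMr // mul1r -sum; lra.
exists (t * l1 + (1 - t) * l2), (s *: c1 + (1 - s) *: c2); split.
- by apply/andP; split; lra.
- exact: conv2.
- apply/rowP => j; rewrite !mxE /s; field; exact: Dn.
Qed.

Lemma conv_single (w p : V) : conv (fun q => q = w) p -> p = w.
Proof.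
apply: (conv_ind (P := fun p => p = w)) => // t u w' _ -> ->.
by apply/rowP => j; rewrite !mxE; ring.
Qed.

Lemma conv_seg (u w p : V) : conv (fun q => q = u \/ q = w) p ->
  exists mu, 0 <= mu <= 1 /\ p = mu *: u + (1 - mu) *: w.
Proof.
move=> /(conv_dec (S := fun q => q = w) (c0 := w) erefl) [l [c [lb /conv_single -> ->]]].
by exists l.
Qed.

Lemma key (S : V -> Prop) vx vh vy p c lam mu :
  0 <= mu <= 1 -> 0 < lam <= 1 -> conv S p -> conv S c ->
  p = mu *: vx + (1 - mu) *: vh -> vy = lam *: vh + (1 - lam) *: c ->
  exists al, 0 <= al <= 1 /\ conv S (al *: vx + (1 - al) *: vy).
Proof.
move=> /andP[m0 m1] /andP[l0 l1] Cp Cc ep ey.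
have lm0 : 0 <= lam * mu by apply: mulr_ge0 => //; apply: ltW.
have lm1 : lam * mu <= mu by rewrite ler_piMl.
have D0 : 0 < 1 - mu + lam * mu.
  have [m1e|m1n] := eqVneq mu 1.
    by rewrite m1e subrr add0r mulr1.
  have : mu < 1 by rewrite lt_neqAle m1n.
  lra.
have Dn : 1 - mu + lam * mu != 0 by rewrite gt_eqF.
set b := lam / (1 - mu + lam * mu).
have b0 : 0 <= b <= 1.
  apply/andP; split; first by apply: divr_ge0 => //; apply: ltW.
  rewrite ler_pdivrMr // mul1r.
  have : lam * (1 - mu) <= 1 - mu by rewrite ler_piMl //; lra.
  have -> : lam * (1 - mu) = lam - lam * mu by ring.
  lra.
exists (b * mu); split.
  apply/andP; split; first by apply: mulr_ge0 => //; case/andP: b0.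
  rewrite /b mulrAC ler_pdivrMr // mul1r; lra.
have -> : b * mu *: vx + (1 - b * mu) *: vy = b *: p + (1 - b) *: c.
  rewrite ep ey /b; apply/rowP => j; rewrite !mxE; field; exact: Dn.
exact: conv2.
Qed.

Notation E z := (emb R z).
Notation ES A := (@embset R d A).

Lemma nonemptyX (X : 'rV[int]_d -> Prop) h : aff (ES X) (E h) -> exists x0, X x0.
Proof.
move=> [n [v [l [Sv l1 _]]]]; case: n v l Sv l1 => [|n] v l Sv l1.
  by move: l1; rewrite big_ord0 => /eqP; rewrite eq_sym oner_eq0.
by have [z Xz _] := Sv ord0; exists z.
Qed.

Lemma decomp_y (X : 'rV[int]_d -> Prop) h y x0 : X x0 ->
  conv (ES (fun w => w = h \/ X w)) (E y) ->
  exists lam c, [/\ 0 <= lam <= 1, conv (ES X) c & E y = lam *: E h + (1 - lam) *: c].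
Proof.
move=> X0 Cy; apply: (conv_dec (c0 := E x0)); first by exists x0.
by apply: conv_mono Cy => q [z [->|Xz] ->]; [left|right; exists z].
Qed.



Lemma keyA (X H : 'rV[int]_d -> Prop) h y : lattice_convex R X -> hiding R X H -> H h ->
  ~ X y -> conv (ES (fun w => w = h \/ X w)) (E y) ->
  forall x, H x -> x <> h ->
  exists al, 0 <= al <= 1 /\ conv (ES X) (al *: E x + (1 - al) *: E y).
Proof.
move=> LC [H1 H2] Hh nXy Cy x Hx xh.
have [x0 X0] := nonemptyX (H1 h Hh).1.
have [lam [c [/andP[l0 l1] Cc ey]]] := decomp_y X0 Cy.
have lp : 0 < lam.
  rewrite lt_neqAle l0 andbT; apply/negP => /eqP l0e; apply: nXy; apply/LC.
  by rewrite ey -l0e scale0r add0r subr0 scale1r.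
have [p [Cp1 Cp2]] := H2 x h Hx Hh xh.
have Cp1' : conv (fun q => q = E x \/ q = E h) p.
  by apply: conv_mono Cp1 => q [z [->|->] ->]; [left|right].
have [mu [mb ep]] := conv_seg Cp1'.
by apply: (key mb _ Cp2 Cc ep ey); rewrite lp l1.
Qed.

Lemma part1 (X H : 'rV[int]_d -> Prop) h y : lattice_convex R X -> hiding R X H -> H h ->
  observer R X y -> conv (ES (fun w => w = h \/ X w)) (E y) ->
  hiding R X (fun w => (H w /\ w <> h) \/ w = y).
Proof.
move=> LC HH Hh [nXy _] Cy.
have A := keyA LC HH Hh nXy Cy.
case: HH => H1 H2.
have [x0 X0] := nonemptyX (H1 h Hh).1.
split.
  move=> w [[Hw _]|->]; first exact: H1.
  split=> //.
  have [lam [c [_ Cc ->]]] := decomp_y X0 Cy.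
  by apply: aff2; [exact: (H1 h Hh).1 | exact: conv_aff].
have seg : forall u w al, conv (ES (fun v => v = u \/ v = w)) (al *: E u + (1 - al) *: E w) \/ True.
  by move=> *; right.
move=> u w [[Hu uh]|->] [[Hw wh]|->] uw.
- exact: H2.
- have [al [/andP[a0 a1] C]] := A u Hu uh.
  exists (al *: E u + (1 - al) *: E y); split => //.
  apply: conv2; first by rewrite a0 a1.
    by apply: conv_pt; exists u; [left|].
  by apply: conv_pt; exists y; [right|].
- have [al [/andP[a0 a1] C]] := A w Hw wh.
  exists (al *: E w + (1 - al) *: E y); split => //.
  apply: conv2; first by rewrite a0 a1.
    by apply: conv_pt; exists w; [right|].
  by apply: conv_pt; exists y; [left|].
- by case: uw.
Qed.

Lemma bound_seq (s : seq 'rV[int]_d) :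
  exists M : nat, forall w, w \in s -> forall j, `|w 0 j| <= M%:Z.
Proof.
elim: s => [|a s [M HM]]; first by exists 0%N.
exists (maxn (\max_j absz (a 0%R j)) M) => w; rewrite in_cons => /orP[/eqP ->|ws] j.
  by rewrite -abszE lez_nat; apply: leq_trans (leq_bigmax j) (leq_maxl _ _).
have := HM w ws j; rewrite -abszE !lez_nat => hb.
exact: leq_trans hb (leq_maxr _ _).
Qed.

Lemma conv_bound (P : 'rV[int]_d -> Prop) (M : nat) :
  (forall w, P w -> forall j, `|w 0 j| <= M%:Z) ->
  forall z, conv (ES P) (E z) -> forall j, `|z 0 j| <= M%:Z.
Proof.
move=> HB z Cz j.
have : forall j, `|(E z) 0 j| <= (M%:Z)%:~R.
  apply: (conv_ind (P := fun q : 'rV[R]_d => forall j, `|q 0 j| <= (M%:Z)%:~R)) Cz.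
    move=> v [w Pw ->] k; rewrite /emb mxE -intr_norm ler_int; exact: HB.
  move=> t u w /andP[t0 t1] Hu Hw k; rewrite !mxE.
  have t1' : 0 <= 1 - t by lra.
  apply: le_trans (ler_normD _ _) _; rewrite !normrM (ger0_norm t0) (ger0_norm t1').
  have := Hu k; have := Hw k; nra.
move=> /(_ j); rewrite /emb mxE -intr_norm ler_int //.
Qed.

Lemma enum_box (M : nat) : exists L : seq 'rV[int]_d,
  forall z : 'rV[int]_d, (forall j, `|z 0 j| <= M%:Z) -> z \in L.
Proof.
exists [seq (\row_j (((f : {ffun 'I_d -> 'I_(M + M).+1}) j : nat)%:Z - M%:Z)) | f <- enum {ffun 'I_d -> 'I_(M + M).+1}].
move=> z Hz.
pose f := [ffun j => (inord (absz (z 0 j + M%:Z)) : 'I_(M + M).+1)].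
have -> : z = \row_j ((f j : nat)%:Z - M%:Z).
  apply/rowP => j; rewrite !mxE ffunE.
  have := Hz j; rewrite ler_norml => /andP[h1 h2].
  have p0 : 0 <= z 0 j + M%:Z by lra.
  rewrite inordK.
    by rewrite abszE ger0_norm // addrK.
  by rewrite ltnS -lez_nat abszE ger0_norm // PoszD; lra.
by apply: map_f; rewrite mem_enum.
Qed.

Lemma conv_trans (X : 'rV[int]_d -> Prop) y z q :
  conv (ES (fun w => w = y \/ X w)) (E z) ->
  conv (ES (fun w => w = z \/ X w)) q -> conv (ES (fun w => w = y \/ X w)) q.
Proof.
move=> Cz; apply: (conv_ind (P := conv (ES (fun w => w = y \/ X w)))).
  by move=> v [w [->|Xw] ->] //; apply: conv_pt; exists w; [right|].
by move=> t u w tb Cu Cw; apply: conv2.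
Qed.

Lemma strict (X : 'rV[int]_d -> Prop) y z x0 : lattice_convex R X -> X x0 -> ~ X y ->
  conv (ES (fun w => w = y \/ X w)) (E z) -> conv (ES (fun w => w = z \/ X w)) (E y) -> z = y.
Proof.
move=> LC X0 nXy Cz Cy.
have [lam [c [/andP[l0 l1] Cc ez]]] := decomp_y X0 Cz.
have [mu [c' [/andP[m0 m1] Cc' ey]]] := decomp_y X0 Cy.
have lm : lam * mu <= lam by rewrite ler_piMr.
have lm0 : 0 <= lam * mu by apply: mulr_ge0.
have [e1|n1] := eqVneq (lam * mu) 1.
  have le1 : lam = 1 by lra.
  move: ez; rewrite le1 subrr scale0r addr0 scale1r => /rowP ez.
  apply/rowP => j; have := ez j; rewrite /emb !mxE; exact: intr_inj.
exfalso; apply: nXy; apply/LC.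
have D0 : 0 < 1 - lam * mu.
  have : lam * mu < 1 by rewrite lt_neqAle n1; lra.
  lra.
have Dn : 1 - lam * mu != 0 by rewrite gt_eqF.
pose s := mu * (1 - lam) / (1 - lam * mu).
have -> : E y = s *: c + (1 - s) *: c'.
  apply/rowP => j.
  move/rowP: ez => /(_ j); move/rowP: ey => /(_ j); rewrite !mxE => ey ez.
  have e1 : ((y 0 j)%:~R : R) = mu * (lam * (y 0 j)%:~R + (1 - lam) * c 0 j) + (1 - mu) * c' 0 j.
    by rewrite -ez -ey.
  have e2 : (1 - lam * mu) * ((y 0 j)%:~R : R) = mu * (1 - lam) * c 0 j + (1 - mu) * c' 0 j.
    transitivity ((y 0 j)%:~R - lam * mu * (y 0 j)%:~R : R); first by ring.
    by rewrite {1}e1; ring.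
  apply: (mulfI Dn); rewrite e2 /s; field; exact: Dn.
apply: conv2 => //.
apply/andP; split.
  apply: divr_ge0; [apply: mulr_ge0 => //; lra | exact: ltW].
rewrite ler_pdivrMr // mul1r.
have -> : mu * (1 - lam) = mu - lam * mu by ring.
lra.
Qed.

Lemma obs_exists (X : 'rV[int]_d -> Prop) x0 : lattice_convex R X -> X x0 ->
  forall n y (L : seq 'rV[int]_d), ~ X y ->
  (forall z, ~ X z -> conv (ES (fun w => w = y \/ X w)) (E z) -> z \in L) ->
  (size L <= n)%N ->
  exists y', observer R X y' /\ conv (ES (fun w => w = y \/ X w)) (E y').
Proof.
move=> LC X0; elim=> [|n IH] y L nXy HL sL.
  have : y \in L by apply: HL => //; apply: conv_pt; exists y; [left|].
  by case: L sL HL.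
case: (classic (observer R X y)) => Oy.
  by exists y; split => //; apply: conv_pt; exists y; [left|].
have : ~ lattice_convex R (fun w => X w \/ w = y) by move=> K; apply: Oy; split.
move=> /not_all_ex_not [z Hz].
have [Cz nz] : conv (ES (fun w => X w \/ w = y)) (E z) /\ ~ (X z \/ z = y).
  case: (classic (conv (ES (fun w => X w \/ w = y)) (E z))) => C.
    by split => // K; apply: Hz; split.
  exfalso; apply: Hz; split => // K; exfalso; apply: C; apply: conv_pt; exists z => //.
have Cz' : conv (ES (fun w => w = y \/ X w)) (E z).
  by apply: conv_mono Cz => q [w Pw ->]; exists w => //; case: Pw; [right|left].
have nXz : ~ X z by move=> K; apply: nz; left.
have yL : y \in L by apply: HL => //; apply: conv_pt; exists y; [left|].
have HL' : forall w, ~ X w -> conv (ES (fun w => w = z \/ X w)) (E w) -> w \in filter (predC1 y) L.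
  move=> w nXw Cw; rewrite mem_filter; apply/andP; split.
    apply/eqP => wy; apply: nz; right; symmetry.
    apply: (strict LC X0 nXz _ Cz').
    by rewrite -wy.
  by apply: HL => //; apply: (conv_trans Cz').
have sL' : (size (filter (predC1 y) L) <= n)%N.
  rewrite size_filter -ltnS; apply: leq_trans sL.
  rewrite -(count_predC (predC1 y) L).
  have : (0 < count (predC (predC1 y)) L)%N.
    rewrite -has_count; apply/hasP; exists y => //=; by rewrite negbK.
  by move=> h; rewrite -addn1 leq_add2l.
have [y' [Oy' Cy']] := IH z (filter (predC1 y) L) nXz HL' sL'.
by exists y'; split => //; apply: (conv_trans Cz').
Qed.

Lemma hiding_ext (X P Q : 'rV[int]_d -> Prop) :
  (forall w, P w <-> Q w) -> hiding R X P -> hiding R X Q.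
Proof.
move=> PQ [H1 H2]; split.
  by move=> x /PQ; exact: H1.
by move=> x y /PQ Px /PQ Py; exact: H2.
Qed.

Lemma filter_lt (s : seq 'rV[int]_d) h n : h \in s -> (size s <= n.+1)%N ->
  (size (filter (predC1 h) s) <= n)%N.
Proof.
move=> hs sL.
rewrite size_filter -ltnS; apply: leq_trans sL.
rewrite -(count_predC (predC1 h) s).
have : (0 < count (predC (predC1 h)) s)%N.
  rewrite -has_count; apply/hasP; exists h => //=; by rewrite negbK.
by move=> k; rewrite -addn1 leq_add2l.
Qed.

Lemma part2 (X : {fset 'rV[int]_d}) : lattice_convex R (fun w => w \in X) ->
  forall n (H : {fset 'rV[int]_d}) (s : seq 'rV[int]_d),
  hiding R (fun w => w \in X) (fun w => w \in H) ->
  (forall w, w \in H -> ~ observer R (fun w => w \in X) w -> w \in s) -> (size s <= n)%N ->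
  exists H' : {fset 'rV[int]_d},
    [/\ hiding R (fun w => w \in X) (fun w => w \in H'),
        (forall w, w \in H' -> observer R (fun w => w \in X) w)
      & #|` H'| = #|` H|].
Proof.
move=> LC; elim=> [|n IH] H s HH Hs sn;
  (case: (classic (exists h, h \in H /\ ~ observer R (fun w => w \in X) h)) =>
    [[h [hH nOh]]|Nh]; last first;
   [exists H; split => // w wH; apply: NNPP => K; apply: Nh; by exists w|]).
  by have := Hs h hH nOh; case: s sn Hs.
have HH0 := HH; case: HH0 => H1 H2.
have [aff_h nXh] := H1 h hH.
have [x0 X0] := nonemptyX aff_h.
have [M HM] := bound_seq (h :: X).
have [L HL] := enum_box M.
have HL' : forall z, ~ (z \in X) -> conv (ES (fun w => w = h \/ w \in X)) (E z) -> z \in L.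
  move=> z _ Cz; apply: HL.
  apply: (conv_bound (P := fun w => w = h \/ w \in X)) Cz => w [->|wX] j; apply: HM.
    by rewrite in_cons eqxx.
  by rewrite in_cons wX orbT.
have [y [Oy Cy]] := obs_exists LC X0 nXh HL' (leqnn _).
have hyp1 := part1 LC HH hH Oy Cy.
have yh : y <> h by move=> e; apply: nOh; rewrite -e.
have yH : y \notin H.
  apply/negP => yH.
  have [al [_ C]] := keyA LC HH hH Oy.1 Cy yH yh.
  move: C; have -> : al *: E y + (1 - al) *: E y = E y.
    by apply/rowP => j; rewrite !mxE; ring.
  by move/LC; exact: Oy.1.
have hs : h \in s by apply: Hs.
have Hy1 : hiding R (fun w => w \in X) (fun w => w \in (y |` (H `\ h))%fset).
  apply: hiding_ext hyp1 => w; rewrite in_fset1U in_fsetD1; split.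
    by case=> [[wH /eqP wh]|->]; rewrite ?eqxx // wH wh orbT.
  by case/orP => [/eqP ->|/andP[/eqP wh wH]]; [right|left].
have Hy2 : forall w, w \in (y |` (H `\ h))%fset -> ~ observer R (fun w => w \in X) w ->
    w \in filter (predC1 h) s.
  move=> w; rewrite in_fset1U in_fsetD1 => /orP[/eqP ->|/andP[wh wH]] nO //.
  by rewrite mem_filter /= wh /=; apply: Hs.
have [H' [HH' HO HC]] := IH (y |` (H `\ h))%fset (filter (predC1 h) s) Hy1 Hy2 (filter_lt hs sn).
exists H'; split => //; rewrite HC cardfsU1 (cardfsD1 h H) hH in_fsetD1.
by rewrite (negbTE yH) andbF.
Qed.

End Aux.

Local Open Scope fset_scope.

Theorem lemma2p6 (R : realFieldType) (d : nat) (X : {fset 'rV[int]_d}) :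
  lattice_convex R (fun w => w \in X) ->
  (* main claim: replacing h by an observer y in conv({h} ∪ X) *)
  (forall (H : 'rV[int]_d -> Prop) (h : 'rV[int]_d),
     hiding R (fun w => w \in X) H -> H h -> ~ observer R (fun w => w \in X) h ->
     forall y : 'rV[int]_d,
       observer R (fun w => w \in X) y ->
       conv (@embset R d (fun w => w = h \/ w \in X)) (@emb R d y) ->
       hiding R (fun w => w \in X) (fun w => (H w /\ w <> h) \/ w = y)) /\
  (* in particular: a maximum size hiding set can be taken inside obs(X) *)
  (forall H : {fset 'rV[int]_d},
     hiding R (fun w => w \in X) (fun w => w \in H) ->
     (forall H' : 'rV[int]_d -> Prop, hiding R (fun w => w \in X) H' ->
        exists s : {fset 'rV[int]_d},
          (forall w, H' w <-> w \in s) /\ (#|` s| <= #|` H|)%N) ->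
     exists H' : {fset 'rV[int]_d},
       [/\ hiding R (fun w => w \in X) (fun w => w \in H'),
           (forall w, w \in H' -> observer R (fun w => w \in X) w)
         & #|` H'| = #|` H|]).
Proof.
move=> LC; split.
  by move=> H h HH Hh _ y Oy Cy; apply: part1 Oy Cy.
move=> H HH _.
apply: (part2 LC (n := size (enum_fset H)) (s := enum_fset H)) => //.
Qed.
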